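(* Let $X\subseteq A^{\mathbb{N}}$ be a (one-sided) sofic shift over a finite alphabet $A$ with exactly one periodic point. Then this periodic point is $a^\omega$ for some letter $a\in A$, $X$ is countable, and for any bijection $\pi\colon A\to\{0,\dots,|A|-1\}$ with $\pi(a)=0$ the set $\pi(X)\subseteq\mathbb{N}^{\mathbb{N}}$ has finite coding dimension.
   Context: A one-sided sofic shift is the set of labels of right-infinite paths in a finite edge-labeled graph. A periodic point is $\mathbf{x}\in X$ with $\mathbf{x}=u^\omega$ for some nonempty word $u$. $\pi$ is applied letterwise. The coding dimension of $Y\subseteq\mathbb{N}^{\mathbb{N}}$ is the least $d\in\mathbb{N}$ with $\sum_iy_i\le d$ for all $\mathbf{y}\in Y$, if it exists. *)

(* Defs.v *)
From mathcomp Require Import all_boot.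
Set Implicit Arguments. Unset Strict Implicit. Unset Printing Implicit Defensive.

(* Labels of right-infinite paths in the finite edge-labelled graph
   (vertices V, edges E, source s, target t, label l). *)
Definition path_labels (A V E : Type) (s t : E -> V) (l : E -> A) (x : nat -> A) : Prop :=
  exists e : nat -> E, (forall n, t (e n) = s (e n.+1)) /\ (forall n, x n = l (e n)).

Definition sofic_shift (A : finType) (X : (nat -> A) -> Prop) : Prop :=
  exists (V E : finType) (s t : E -> V) (l : E -> A),
    forall x, X x <-> path_labels s t l x.

(* u^omega for a word u (only meaningful for u nonempty). *)
Definition omega (A : Type) (a0 : A) (u : seq A) : nat -> A :=
  fun n => nth a0 u (n %% size u).

Definition periodic_seq (A : Type) (x : nat -> A) : Prop :=
  exists u : seq A, exists a0 : A, 0 < size u /\ forall n, x n = omega a0 u n.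

Definition periodic_point (A : Type) (X : (nat -> A) -> Prop) (x : nat -> A) : Prop :=
  X x /\ periodic_seq x.

Definition countable_set (T : Type) (X : T -> Prop) : Prop :=
  exists f : T -> nat, forall x y, X x -> X y -> f x = f y -> x = y.

Definition image_letterwise (A B : Type) (pi : A -> B) (X : (nat -> A) -> Prop)
  : (nat -> B) -> Prop :=
  fun y => exists x, X x /\ forall n, y n = pi (x n).

(* Y has finite coding dimension: some d in N bounds sum_i y_i for all y in Y
   (the infinite sum of naturals is <= d iff all its partial sums are). *)
Definition finite_coding_dimension (Y : (nat -> nat) -> Prop) : Prop :=
  exists d : nat, forall y, Y y -> forall n, \sum_(i < n) y i <= d.

(* Main.v *)
From Stdlib Require Import ClassicalEpsilon Classical FunctionalExtensionality.
Require Import Defs.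
From mathcomp Require Import all_boot.
From mathcomp Require Import zify.
Set Implicit Arguments. Unset Strict Implicit.

Lemma periodic_of (A:Type) (x: nat->A) p : 0 < p -> (forall n, x n = x (n %% p)) -> periodic_seq x.
Proof.
move=> p0 H; exists (mkseq x p), (x 0); rewrite size_mkseq; split=>// n.
by rewrite /omega size_mkseq nth_mkseq ?ltn_pmod // -H.
Qed.

Lemma periodic_mod (A:Type) (x: nat->A) : periodic_seq x -> exists2 p, 0<p & forall n, x n = x (n %% p).
Proof. by case=> u [a0 [u0 H]]; exists (size u)=>// n; rewrite !H /omega modn_mod. Qed.

Theorem mainTheorem13 (A : finType) (X : (nat -> A) -> Prop) :
  sofic_shift X ->
  (exists! x, periodic_point X x) ->
  exists a : A,
    (forall x, periodic_point X x -> forall n, x n = a) /\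
    countable_set X /\
    (forall pi : A -> 'I_#|A|, bijective pi -> nat_of_ord (pi a) = 0 ->
       finite_coding_dimension
         (image_letterwise (fun b => nat_of_ord (pi b)) X)).
Proof.
move=> [V [E [s [t [l HX]]]]] [x0 [[X0 P0] U]].
have shiftX : forall x, X x -> X (fun n => x n.+1).
  move=> x /HX [e [He1 He2]]; apply/HX; exists (fun n => e n.+1); split=> n.
    exact: He1.
  exact: He2.
have Hconst: forall n, x0 n = x0 0.
  have [p p0 Hp] := periodic_mod P0.
  have E1 : x0 = (fun n => x0 n.+1).
    apply: U; split; first exact: shiftX.
    apply: (periodic_of p0) => n /=.
    rewrite Hp [RHS]Hp -[n.+1]addn1 -[(n %% p).+1]addn1 modnDml //.
  elim=> // n IH; rewrite -IH.
  by move: (congr1 (fun f => f n) E1) => /= ->.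
set a := x0 0; exists a.
have Hper: forall x, periodic_point X x -> forall n, x n = a.
  by move=> x /U <-; exact: Hconst.
have Hcyc: forall e : nat -> E, (forall n, t (e n) = s (e n.+1)) ->
    forall i j, i < j -> e i = e j -> forall k, i <= k < j -> l (e k) = a.
  move=> e He i j ij eij k /andP[ik kj].
  set p := j - i.
  have p0 : 0 < p by rewrite subn_gt0.
  pose e' n := e (i + n %% p).
  have Xy : X (fun n => l (e' n)).
    apply/HX; exists e'; split=> // n; rewrite /e'.
    case: (ltnP (n %% p).+1 p) => h.
      have -> : n.+1 %% p = (n %% p).+1 by rewrite -[n.+1]addn1 -modnDml addn1 modn_small.
      rewrite addnS; exact: He.
    have hp: (n %% p).+1 = p by apply/eqP; rewrite eqn_leq h ltn_pmod.
    rewrite -[n.+1]addn1 -modnDml addn1 hp modnn addn0 eij He.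
    have -> : j = (i + n %% p).+1 by rewrite -addnS hp /p subnKC // ltnW.
    by [].
  have Py : periodic_point X (fun n => l (e' n)).
    split; first done.
    by apply: (periodic_of p0) => n; rewrite /e' modn_mod.
  have := Hper _ Py (k - i). rewrite /e' /= modn_small; last by rewrite /p; lia.
  by rewrite subnKC.
have Hcount: forall x, X x -> forall n, count (fun i => x i != a) (iota 0 n) <= #|E|.
  move=> x /HX [e [He Hl]] n.
  rewrite -size_filter.
  set L := filter _ _.
  have uL : uniq (map e L).
    rewrite map_inj_in_uniq ?filter_uniq ?iota_uniq //.
    move=> i j; rewrite !mem_filter => /andP[hi _] /andP[hj _] eij.
    case: (ltngtP i j) => // hij.
      by move: hi; rewrite Hl (Hcyc e He i j hij eij i) ?leqnn ?hij ?eqxx.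
    by move: hj; rewrite Hl (Hcyc e He j i hij (esym eij) j) ?leqnn ?hij ?eqxx.
  rewrite -(size_map e) -(card_uniqP uL); exact: max_card.
split=> //; split.
  have Hfin: forall x, X x -> exists N, forall n, N <= n -> x n = a.
    move=> x Xx; apply: NNPP => hn.
    have hall: forall N, exists n, N <= n /\ x n != a.
      move=> N; apply: NNPP => h2; apply: hn; exists N => n Nn.
      apply/eqP; apply: NNPP => h3; apply: h2; exists n; split=> //; exact/negP.
    have mono: forall n m, count (fun i => x i != a) (iota 0 n) <=
                            count (fun i => x i != a) (iota 0 (n + m)).
      by move=> ? ?; rewrite iotaD count_cat leq_addr.
    have: forall k, exists n, k <= count (fun i => x i != a) (iota 0 n).
      elim=> [|k [n hk]]; first by exists 0.
      have [n' [h1 h2]] := hall n; exists n'.+1.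
      have := mono n (n' - n); rewrite subnKC // => hm.
      rewrite -[n'.+1]addn1 iotaD count_cat /= h2 /=; lia.
    move=> /(_ #|E|.+1) [n]; by rewrite ltnNge Hcount.
  pose f (x : nat -> A) := pickle (epsilon (inhabits ([::] : seq A))
                              (fun L => forall n, x n = nth a L n)).
  exists f => x y Xx Xy /(pcan_inj pickleK_inv) eq.
  have ex : forall z, X z -> exists L : seq A, forall n, z n = nth a L n.
    move=> z /Hfin [N HN]; exists (mkseq z N) => n.
    case: (ltnP n N) => h; first by rewrite nth_mkseq.
    by rewrite nth_default ?size_mkseq // HN.
  have hx := epsilon_spec (inhabits ([::] : seq A)) _ (ex x Xx).
  have hy := epsilon_spec (inhabits ([::] : seq A)) _ (ex y Xy).
  apply: functional_extensionality => n; by rewrite hx hy eq.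
move=> pi [pinv pK Kp] pa0; exists (#|E| * (#|A|).-1) => y [x [Xx Hy]] n.
apply: (@leq_trans (count (fun i => x i != a) (iota 0 n) * (#|A|).-1)); last first.
  by rewrite leq_mul2r Hcount ?orbT.
elim: n => [|n IH]; first by rewrite big_ord0.
have -> : count (fun i => x i != a) (iota 0 n.+1) = count (fun i => x i != a) (iota 0 n) + (x n != a) by rewrite -[n.+1]addn1 iotaD count_cat /= addn0.
rewrite big_ord_recr /= mulnDl.
apply: leq_add => //; rewrite Hy.
have [->|ne] := eqVneq (x n) a; first by rewrite pa0.
rewrite /= mul1n; have h := ltn_ord (pi (x n)).
by rewrite -ltnS (ltn_predK h).
Qed.
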